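(* Let $\Gamma$ be a $\Bbbk$-algebra and $\sim$ an equivalence relation on $\mathrm{cfs}(\Gamma)$. If $V$ is a block module and $f:V\to W$ is a $\Gamma$-module map, then $f(V)\subseteq\bigoplus_{B\in\mathrm{Supp}(V)}W(B)$. If moreover $W$ is a block module, then $f=\bigoplus_{B\in\mathrm{cfs}(\Gamma)/{\sim}}f_B$ where $f_B=\pi_B\circ f\circ\iota_B:V(B)\to W(B)$.
   Context: $\mathrm{cfs}(\Gamma)$: maximal two-sided ideals $\mathfrak m$ of $\Gamma$ with $\dim\Gamma/\mathfrak m<\infty$. For a class $B$, $\mathcal W(B)=\{\mathfrak m_1\cdots\mathfrak m_k:k\ge0,\mathfrak m_i\in B\}$; for a $\Gamma$-module $V$, $V(B)=\{v:\mathfrak m v=0$ for some $\mathfrak m\in\mathcal W(B)\}$ (the sum of the $V(B)$ is direct). $V$ is a block module if $V=\bigoplus_BV(B)$, with projections $\pi_B$ and inclusions $\iota_B$; $\mathrm{Supp}(V)=\{B:V(B)\neq0\}$. *)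

(* Defs.v *)
From HB Require Import structures.
From mathcomp Require Import all_boot all_algebra.
From Stdlib Require Import ClassicalEpsilon.
From Stdlib Require List.
Set Implicit Arguments. Unset Strict Implicit. Unset Printing Implicit Defensive.
Import GRing.Theory.
Local Open Scope ring_scope.

Section Defs.
Variables (K : fieldType) (G : algType K).

Definition GModule (V : lmodType K) (act : G -> V -> V) : Prop :=
  (forall a u v, act a (u + v) = act a u + act a v) /\
  [/\ (forall a b v, act (a + b) v = act a v + act b v),
      (forall (k : K) a v, act (k *: a) v = k *: act a v),
      (forall (k : K) a v, act a (k *: v) = k *: act a v),
      (forall v, act 1 v = v) &
      (forall a b v, act (a * b) v = act a (act b v))].

Definition GModMap (V W : lmodType K) (actV : G -> V -> V) (actW : G -> W -> W)
  (f : V -> W) : Prop :=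
  [/\ (forall u v, f (u + v) = f u + f v),
      (forall (k : K) v, f (k *: v) = k *: f v) &
      (forall a v, f (actV a v) = actW a (f v))].

Definition Ideal (m : G -> Prop) : Prop :=
  [/\ m 0, (forall x y, m x -> m y -> m (x + y)),
      (forall (k : K) x, m x -> m (k *: x)),
      (forall a x, m x -> m (a * x)) &
      (forall a x, m x -> m (x * a))].

(* cfs(G): maximal two-sided ideals of finite codimension *)
Definition cfs (m : G -> Prop) : Prop :=
  [/\ Ideal m,
      ~ (forall x, m x),
      (forall n, Ideal n -> (forall x, m x -> n x) ->
          (forall x, n x -> m x) \/ (forall x, n x)) &
      exists (d : nat) (e : 'I_d -> G), forall x,
          exists c : 'I_d -> K, m (x - \sum_(i < d) c i *: e i)].

Fixpoint picks (ms : seq (G -> Prop)) (x : G) : Prop :=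
  match ms with
  | [::] => x = 1
  | m :: ms' => exists a y, m a /\ picks ms' y /\ x = a * y
  end.

(* the product ideal m_1 ... m_k (the unit ideal for k = 0) *)
Definition prodI (ms : seq (G -> Prop)) (x : G) : Prop :=
  forall I, Ideal I -> (forall y, picks ms y -> I y) -> I x.

Definition Vblk (V : lmodType K) (act : G -> V -> V) (B : (G -> Prop) -> Prop)
  (v : V) : Prop :=
  exists ms : seq (G -> Prop), (forall m, List.In m ms -> B m) /\
    (forall x, prodI ms x -> act x v = 0).

Definition cls (rel : (G -> Prop) -> (G -> Prop) -> Prop) (m : G -> Prop) :
  (G -> Prop) -> Prop := fun n => cfs n /\ rel m n.

Definition EquivOnCfs (rel : (G -> Prop) -> (G -> Prop) -> Prop) : Prop :=
  [/\ (forall m, cfs m -> rel m m),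
      (forall m n, cfs m -> cfs n -> rel m n -> rel n m) &
      (forall m n p, cfs m -> cfs n -> cfs p -> rel m n -> rel n p -> rel m p)].

Definition inSupp (V : lmodType K) (act : G -> V -> V) rel (m : G -> Prop) : Prop :=
  exists v : V, v <> 0 /\ Vblk act (cls rel m) v.

(* V is a block module: V = sum of the V(B) (the sum is automatically direct) *)
Definition blockModule (V : lmodType K) (act : G -> V -> V) rel : Prop :=
  forall v : V, exists s : seq ((G -> Prop) * V),
    (forall p, List.In p s -> cfs p.1 /\ Vblk act (cls rel p.1) p.2) /\
    v = \sum_(p <- s) p.2.

Definition isProj (V : lmodType K) (act : G -> V -> V) rel (m : G -> Prop)
  (v u : V) : Prop :=
  Vblk act (cls rel m) u /\
  exists s : seq ((G -> Prop) * V),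
    (forall p, List.In p s -> [/\ cfs p.1, ~ rel m p.1 & Vblk act (cls rel p.1) p.2]) /\
    v - u = \sum_(p <- s) p.2.

(* the projection pi_B (composed with the inclusion iota_B) *)
Definition proj (V : lmodType K) (act : G -> V -> V) rel (m : G -> Prop)
  (v : V) : V := epsilon (inhabits (0 : V)) (isProj act rel m v).

End Defs.

(* Main.v *)
Require Import Defs.
From mathcomp Require Import all_boot all_algebra.
From Stdlib Require List.
From Stdlib Require Import ClassicalEpsilon FunctionalExtensionality PropExtensionality.
Set Implicit Arguments. Unset Strict Implicit. Unset Printing Implicit Defensive.
Import GRing.Theory.
Local Open Scope ring_scope.

Section Ideals.
Variables (K : fieldType) (G : algType K).

Lemma picks_cat (a b : seq (G -> Prop)) y : picks (a ++ b) y ->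
  exists y1 y2, picks a y1 /\ picks b y2 /\ y = y1 * y2.
Proof.
elim: a y => [|n a IH] y /=.
  by move=> h; exists 1, y; rewrite mul1r.
case=> c [z [hc [hz ->]]].
have [z1 [z2 [h1 [h2 ->]]]] := IH z hz.
exists (c * z1), z2; split; first by exists c, z1.
by split => //; rewrite mulrA.
Qed.

Lemma prodI_ideal (ms : seq (G -> Prop)) : Ideal (prodI ms).
Proof.
split.
- by move=> I [h0 _ _ _ _] _.
- move=> x y hx hy I hI hp; case: (hI) => _ hadd _ _ _.
  exact: hadd (hx I hI hp) (hy I hI hp).
- move=> k x hx I hI hp; case: (hI) => _ _ hs _ _; exact: hs (hx I hI hp).
- move=> a x hx I hI hp; case: (hI) => _ _ _ hl _; exact: hl (hx I hI hp).
- move=> a x hx I hI hp; case: (hI) => _ _ _ _ hr; exact: hr (hx I hI hp).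
Qed.

Lemma picks_prodI (ms : seq (G -> Prop)) y : picks ms y -> prodI ms y.
Proof. by move=> h I _ hp; apply: hp. Qed.

Lemma prodI_catl (a b : seq (G -> Prop)) x : prodI (a ++ b) x -> prodI a x.
Proof.
move=> h I hI hp; apply: h => // y /picks_cat [y1 [y2 [h1 [h2 ->]]]].
case: hI => _ _ _ _ hr; apply: hr; exact: hp.
Qed.

Lemma prodI_catr (a b : seq (G -> Prop)) x : prodI (a ++ b) x -> prodI b x.
Proof.
move=> h I hI hp; apply: h => // y /picks_cat [y1 [y2 [h1 [h2 ->]]]].
case: hI => _ _ _ hl _; apply: hl; exact: hp.
Qed.

Lemma prodI_cons (n : G -> Prop) ns a b : Ideal n -> n a -> prodI ns b ->
  prodI (n :: ns) (a * b).
Proof.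
move=> hn ha hb I hI hp.
set J := fun y => forall a, n a -> I (a * y).
case: (hI) => I0 Iadd Isc Il Ir.
case: (hn) => n0 nadd nsc nl nr.
have hJ : Ideal J.
  split.
  - by move=> c _; rewrite mulr0.
  - by move=> x y hx hy c hc; rewrite mulrDr; apply: Iadd; [apply: hx | apply: hy].
  - by move=> k x hx c hc; rewrite -scalerAr; apply: Isc; apply: hx.
  - by move=> c x hx c' hc'; rewrite mulrA; apply: hx; apply: nr.
  - by move=> c x hx c' hc'; rewrite mulrA; apply: Ir; apply: hx.
apply: (hb J hJ) => // y hy a' ha'; apply: hp; by exists a', y.
Qed.

Definition comax (I J : G -> Prop) := exists a b, I a /\ J b /\ a + b = 1.

Lemma comax_sym I J : comax I J -> comax J I.
Proof. by case=> a [b [ha [hb e]]]; exists b, a; rewrite addrC. Qed.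

Lemma comax_prod (I : G -> Prop) ns : Ideal I ->
  (forall n, List.In n ns -> Ideal n /\ comax n I) -> comax (prodI ns) I.
Proof.
move=> hI.
elim: ns => [|n ns IH] h; case: (hI) => I0 Iadd Isc Il Ir.
  exists 1, 0; split; first by apply: picks_prodI.
  by split => //; rewrite addr0.
have [hn [a1 [b1 [h1 [h1' e1]]]]] := h n (or_introl erefl).
have [a2 [b2 [h2 [h2' e2]]]] := IH (fun m hm => h m (or_intror hm)).
exists (a1 * a2), (a1 * b2 + b1 * a2 + b1 * b2); split.
  exact: prodI_cons.
split.
  exact: (Iadd _ _ (Iadd _ _ (Il _ _ h2') (Ir _ _ h1')) (Il _ _ h2')).
have e : (a1 + b1) * (a2 + b2) = 1 by rewrite e1 e2 mulr1.
by rewrite -e mulrDl !mulrDr !addrA.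
Qed.

End Ideals.

Section Module.
Variables (K : fieldType) (G : algType K) (V : lmodType K) (act : G -> V -> V).
Hypothesis hV : GModule act.

Lemma act0 x : act x 0 = 0.
Proof.
case: hV => _ [_ _ hs _ _].
transitivity (act x ((0:K) *: (0:V))); first by rewrite scale0r.
by rewrite hs scale0r.
Qed.

Lemma act_opp x v : act x (- v) = - act x v.
Proof. case: hV => _ [_ _ hs _ _]; by rewrite -scaleN1r hs scaleN1r. Qed.

Lemma act_add x u v : act x (u + v) = act x u + act x v.
Proof. by case: hV => h _; apply: h. Qed.

Lemma Vblk_mono (B B' : (G -> Prop) -> Prop) v :
  (forall m, B m -> B' m) -> Vblk act B v -> Vblk act B' v.
Proof. move=> hB [ms [h1 h2]]; exists ms; split => // m hm; apply: hB; exact: h1. Qed.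

Lemma Vblk0 B : Vblk act B 0.
Proof. by exists [::]; split => // x _; apply: act0. Qed.

Lemma Vblk_add B u v : Vblk act B u -> Vblk act B v -> Vblk act B (u + v).
Proof.
move=> [ms [h1 h2]] [ns [h3 h4]]; exists (ms ++ ns); split.
  by move=> m hm; case: (List.in_app_or _ _ _ hm) => ?; [apply: h1 | apply: h3].
move=> x hx; rewrite act_add (h2 x (prodI_catl hx)) (h4 x (prodI_catr hx)).
by rewrite addr0.
Qed.

Lemma Vblk_opp B u : Vblk act B u -> Vblk act B (- u).
Proof.
move=> [ms [h1 h2]]; exists ms; split => // x hx.
by rewrite act_opp h2 // oppr0.
Qed.

Lemma Vblk_sum (T : Type) B (s : seq T) (F : T -> V) :
  (forall p, List.In p s -> Vblk act B (F p)) -> Vblk act B (\sum_(p <- s) F p).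
Proof.
elim: s => [|p s IH] h; first by rewrite big_nil; apply: Vblk0.
rewrite big_cons; apply: Vblk_add; first by apply: h; left.
by apply: IH => q hq; apply: h; right.
Qed.

Lemma direct0 (B1 B2 : (G -> Prop) -> Prop) u :
  (forall m, B1 m -> Ideal m) -> (forall n, B2 n -> Ideal n) ->
  (forall m n, B1 m -> B2 n -> comax m n) ->
  Vblk act B1 u -> Vblk act B2 u -> u = 0.
Proof.
move=> hI1 hI2 hc [ms [hms hu1]] [ns [hns hu2]].
have : comax (prodI ms) (prodI ns).
  apply: comax_prod; first exact: prodI_ideal.
  move=> m hm; split; first by apply: hI1; apply: hms.
  apply: comax_sym; apply: comax_prod; first by apply: hI1; apply: hms.
  move=> n hn; split; first by apply: hI2; apply: hns.
  by apply: comax_sym; apply: hc; [apply: hms | apply: hns].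
case=> a [b [ha [hb e]]].
case: hV => _ [hD _ _ h1 _].
by rewrite -[u]h1 -e hD hu1 // hu2 // addr0.
Qed.

End Module.

Lemma Vblk_f (K : fieldType) (G : algType K) (V W : lmodType K)
  (actV : G -> V -> V) (actW : G -> W -> W) (f : V -> W) B v :
  GModMap actV actW f -> Vblk actV B v -> Vblk actW B (f v).
Proof.
move=> [fa fs fc] [ms [h1 h2]]; exists ms; split => // x hx.
rewrite -fc h2 //.
transitivity (f ((0:K) *: (0:V))); first by rewrite scale0r.
by rewrite fs scale0r.
Qed.

Lemma f0 (K : fieldType) (G : algType K) (V W : lmodType K)
  (actV : G -> V -> V) (actW : G -> W -> W) (f : V -> W) :
  GModMap actV actW f -> f 0 = 0.
Proof.
move=> [fa fs fc].
transitivity (f ((0:K) *: (0:V))); first by rewrite scale0r.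
by rewrite fs scale0r.
Qed.

Lemma f_sum (K : fieldType) (G : algType K) (V W : lmodType K)
  (actV : G -> V -> V) (actW : G -> W -> W) (f : V -> W) (T : Type)
  (s : seq T) (F : T -> V) :
  GModMap actV actW f -> f (\sum_(p <- s) F p) = \sum_(p <- s) f (F p).
Proof.
move=> hf; elim: s => [|p s IH]; first by rewrite !big_nil (f0 hf).
by rewrite !big_cons; case: hf => fa _ _; rewrite fa IH.
Qed.

Lemma In_filter (T : Type) (P : pred T) (s : seq T) x :
  List.In x (filter P s) -> List.In x s /\ P x.
Proof.
elim: s => [|y s IH] //=; case hy: (P y) => /=.
  by case=> [<-|/IH [h1 h2]]; [split; [left|] | split; [right|]].
by move/IH => [h1 h2]; split => //; right.
Qed.

Lemma In_map (T U : Type) (F : T -> U) (s : seq T) y :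
  List.In y (map F s) -> exists x, List.In x s /\ y = F x.
Proof.
elim: s => [|x s IH] //= [<-|/IH [z [h1 h2]]]; first by exists x; split => //; left.
by exists z; split => //; right.
Qed.

Lemma In_has (T : Type) (P : pred T) (s : seq T) :
  has P s -> exists x, List.In x s /\ P x.
Proof.
elim: s => [|x s IH] //= /orP [h|/IH [z [h1 h2]]]; first by exists x; split => //; left.
by exists z; split => //; right.
Qed.

Lemma In_has' (T : Type) (P : pred T) (s : seq T) x :
  List.In x s -> P x -> has P s.
Proof.
elim: s => [|y s IH] //= [<-|hx] hp; first by rewrite hp.
by rewrite IH ?orbT.
Qed.

Lemma In_nth (T : Type) (d : T) (s : seq T) k : (k < size s)%N -> List.In (nth d s k) s.
Proof.
elim: s k => [|x s IH] [|k] //= h; first by left.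
by right; apply: IH.
Qed.

Lemma count0 (T : Type) (P : pred T) (s : seq T) :
  (forall x, List.In x s -> ~~ P x) -> count P s = 0%N.
Proof.
elim: s => [|x s IH] //= h.
by rewrite (negbTE (h x (or_introl erefl))) IH // => y hy; apply: h; right.
Qed.

Lemma big_In_eq (T : Type) (V : nmodType) (s : seq T) (F H : T -> V) :
  (forall x, List.In x s -> F x = H x) -> \sum_(x <- s) F x = \sum_(x <- s) H x.
Proof.
elim: s => [|x s IH] h; first by rewrite !big_nil.
rewrite !big_cons h; last by left.
by rewrite IH // => y hy; apply: h; right.
Qed.

Section Rel.
Variables (K : fieldType) (G : algType K) (rel : (G -> Prop) -> (G -> Prop) -> Prop).
Hypothesis hrel : EquivOnCfs rel.

Lemma rel_sym m n : cfs m -> cfs n -> rel m n -> rel n m.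
Proof. by case: hrel => _ h _; apply: h. Qed.

Lemma rel_trans m n p : cfs m -> cfs n -> cfs p -> rel m n -> rel n p -> rel m p.
Proof. by case: hrel => _ _ h; apply: h. Qed.

Lemma comax_cfs (m n : G -> Prop) : cfs m -> cfs n -> (m = n -> False) -> comax m n.
Proof.
move=> hm hn hne.
case: (hm) => hIm hnt hmax _.
case: (hn) => hIn hntn hmaxn _.
case: (hIm) => m0 madd msc ml mr.
case: (hIn) => n0 nadd nsc nl nr.
set J := fun x => exists a b, m a /\ n b /\ x = a + b.
have hJ : Ideal J.
  split.
  - by exists 0, 0; rewrite addr0.
  - move=> x y [a [b [ha [hb ->]]]] [a' [b' [ha' [hb' ->]]]].
    by exists (a + a'), (b + b'); split; [|split]; [apply: madd|apply: nadd|rewrite addrACA].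
  - move=> k x [a [b [ha [hb ->]]]].
    by exists (k *: a), (k *: b); split; [|split]; [apply: msc|apply: nsc|rewrite scalerDr].
  - move=> c x [a [b [ha [hb ->]]]].
    by exists (c * a), (c * b); split; [|split]; [apply: ml|apply: nl|rewrite mulrDr].
  - move=> c x [a [b [ha [hb ->]]]].
    by exists (a * c), (b * c); split; [|split]; [apply: mr|apply: nr|rewrite mulrDl].
have hmJ : forall x, m x -> J x by move=> x hx; exists x, 0; rewrite addr0.
case: (hmax J hJ hmJ) => [hJm|hall].
  have hnm : forall x, n x -> m x.
    by move=> x hx; apply: hJm; exists 0, x; rewrite add0r.
  case: (hmaxn m hIm hnm) => [hmn|hallm]; last by case: hnt.
  exfalso; apply: hne; apply: functional_extensionality => x.
  by apply: propositional_extensionality; split; [apply: hmn|apply: hnm].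
by case: (hall 1) => a [b [ha [hb e]]]; exists a, b.
Qed.

Lemma comax_cls m p : cfs m -> cfs p -> ~ rel m p ->
  forall m' n, cls rel m m' -> cls rel p n -> comax m' n.
Proof.
move=> hm hp hnr m' n [hm' rm'] [hn rn].
apply: comax_cfs => // e; subst n.
apply: hnr; apply: (rel_trans hm hm' hp rm'); exact: rel_sym.
Qed.

Definition relb m n : bool :=
  if excluded_middle_informative (rel m n) then true else false.

Lemma relbP m n : reflect (rel m n) (relb m n).
Proof. by rewrite /relb; case: excluded_middle_informative => h; constructor. Qed.

Section Mod.
Variables (V : lmodType K) (act : G -> V -> V).
Hypothesis hV : GModule act.

Lemma uniq_proj m v u1 u2 : cfs m -> isProj act rel m v u1 -> isProj act rel m v u2 ->
  u1 = u2.
Proof.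
move=> hm [hu1 [s1 [hs1 e1]]] [hu2 [s2 [hs2 e2]]].
apply/eqP; rewrite -subr_eq0; apply/eqP.
pose B2 n := exists q, [/\ cfs q, ~ rel m q & cls rel q n].
apply: (direct0 hV (B1 := cls rel m) (B2 := B2)).
- by move=> n [hn _]; case: hn.
- by move=> n [q [_ _ [hn _]]]; case: hn.
- move=> m' n hm' [q [hq hnq hn]]; exact: (comax_cls hm hq hnq hm' hn).
- by apply: Vblk_add => //; apply: Vblk_opp.
have -> : u1 - u2 = (v - u2) - (v - u1) by symmetry; rewrite opprB addrC addrA subrK.
rewrite e1 e2; apply: Vblk_add => //; last apply: Vblk_opp => //.
  apply: Vblk_sum => // p hp; have [h1 h2 h3] := hs2 p hp.
  by apply: Vblk_mono h3 => n hn; exists p.1.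
apply: Vblk_sum => // p hp; have [h1 h2 h3] := hs1 p hp.
by apply: Vblk_mono h3 => n hn; exists p.1.
Qed.

Lemma proj_spec m v : (exists u, isProj act rel m v u) ->
  isProj act rel m v (proj act rel m v).
Proof. by move=> h; rewrite /proj; apply: epsilon_spec. Qed.

Lemma proj_eq m v u : cfs m -> isProj act rel m v u -> proj act rel m v = u.
Proof.
move=> hm hu; apply: (uniq_proj hm _ hu); apply: proj_spec; by exists u.
Qed.

Lemma isProj_sum m (s : seq ((G -> Prop) * V)) : cfs m ->
  (forall p, List.In p s -> cfs p.1 /\ Vblk act (cls rel p.1) p.2) ->
  isProj act rel m (\sum_(p <- s) p.2) (\sum_(p <- s | relb m p.1) p.2).
Proof.
move=> hm hs; split.
  rewrite -big_filter; apply: Vblk_sum => // p hp'; have [hp /relbP hr] := In_filter hp'.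
  have [hc hb] := hs p hp.
  apply: Vblk_mono hb => n [hn rn]; split => //.
  exact: (rel_trans hm hc hn hr rn).
exists (filter (fun p => ~~ relb m p.1) s); split.
  move=> p hp'; have [hp /relbP hr] := In_filter hp'; have [hc hb] := hs p hp; by split.
rewrite big_filter (bigID (fun p => relb m p.1)) /=.
by rewrite addrAC subrr add0r.
Qed.

Lemma proj_sum m (s : seq ((G -> Prop) * V)) : cfs m ->
  (forall p, List.In p s -> cfs p.1 /\ Vblk act (cls rel p.1) p.2) ->
  proj act rel m (\sum_(p <- s) p.2) = \sum_(p <- s | relb m p.1) p.2.
Proof. by move=> hm hs; apply: proj_eq => //; apply: isProj_sum. Qed.

Lemma proj_id m w : cfs m -> Vblk act (cls rel m) w -> proj act rel m w = w.
Proof.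
move=> hm hw; apply: proj_eq => //; split => //.
by exists [::]; split => //; rewrite big_nil subrr.
Qed.

End Mod.

Fixpoint reps (T : Type) (s : seq ((G -> Prop) * T)) : seq (G -> Prop) :=
  match s with
  | [::] => [::]
  | p :: s' => if has (fun m => relb m p.1) (reps s') then reps s'
               else p.1 :: reps s'
  end.

Fixpoint nr (ms : seq (G -> Prop)) : Prop :=
  match ms with
  | [::] => True
  | m :: ms' => (forall m', List.In m' ms' -> ~ rel m m') /\ nr ms'
  end.

Lemma reps_cfs (T : Type) (s : seq ((G -> Prop) * T)) :
  (forall p, List.In p s -> cfs p.1) -> forall m, List.In m (reps s) -> cfs m.
Proof.
elim: s => [|p s IH] //= h m.
have IH' := IH (fun q hq => h q (or_intror hq)).
case: ifP => _; first exact: IH'.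
by case=> [<-|hm]; [apply: h; left | apply: IH'].
Qed.

Lemma reps_nr (T : Type) (s : seq ((G -> Prop) * T)) :
  (forall p, List.In p s -> cfs p.1) -> nr (reps s).
Proof.
elim: s => [|p s IH] //= h.
have IH' := IH (fun q hq => h q (or_intror hq)).
case: ifP => hh //; split => // m' hm' hr.
have hc := reps_cfs (fun q hq => h q (or_intror hq)) hm'.
move/negP: hh; apply; apply: (In_has' hm').
by apply/relbP; apply: rel_sym => //; apply: h; left.
Qed.

Lemma reps_cover (T : Type) (s : seq ((G -> Prop) * T)) :
  (forall p, List.In p s -> cfs p.1) ->
  forall p, List.In p s -> exists m, List.In m (reps s) /\ rel m p.1.
Proof.
elim: s => [|p s IH] //= h q.
have IH' := IH (fun q hq => h q (or_intror hq)).
case=> [<-|hq].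
  case: ifP => hh.
    by have [m [hm /relbP hr]] := In_has hh; exists m.
  exists p.1; split; first by left.
  by case: hrel => hr _ _; apply: hr; apply: h; left.
have [m [hm hr]] := IH' q hq.
by case: ifP => _; exists m; split => //; right.
Qed.

Lemma count1 (ms : seq (G -> Prop)) q : nr ms -> (forall m, List.In m ms -> cfs m) ->
  cfs q -> (exists m, List.In m ms /\ rel m q) -> count (fun m => relb m q) ms = 1%N.
Proof.
elim: ms => [|m ms IH] /=; first by move=> _ _ _ [m []].
move=> [hh hn] hc hq [m0 [hm0 hr0]].
case: (relbP m q) => hmq /=.
  rewrite count0 // => m' hm'; apply/relbP => hr.
  apply: (hh m' hm'); apply: (rel_trans (hc m (or_introl erefl)) hq (hc m' (or_intror hm')) hmq).
  by apply: rel_sym => //; apply: hc; right.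
apply: IH => //; first by move=> m' hm'; apply: hc; right.
case: hm0 => [e|hm0]; first by subst m0.
by exists m0.
Qed.

Lemma nr_nth (ms : seq (G -> Prop)) d : nr ms ->
  forall i j, (i < j < size ms)%N -> ~ rel (nth d ms i) (nth d ms j).
Proof.
elim: ms => [|m ms IH] /=; first by move=> _ i j; rewrite ltn0 andbF.
move=> [hh hn] [|i] [|j] //= hij.
  by apply: hh; apply: In_nth.
exact: IH hn i j hij.
Qed.

End Rel.

Theorem mainTheorem6 (K : fieldType) (G : algType K)
  (rel : (G -> Prop) -> (G -> Prop) -> Prop) (hrel : EquivOnCfs rel)
  (V W : lmodType K) (actV : G -> V -> V) (actW : G -> W -> W)
  (hV : GModule actV) (hW : GModule actW)
  (f : V -> W) (hf : GModMap actV actW f) :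
  blockModule actV rel ->
  (forall v : V, exists s : seq ((G -> Prop) * W),
     (forall p, List.In p s ->
        [/\ cfs p.1, inSupp actV rel p.1 & Vblk actW (cls rel p.1) p.2]) /\
     f v = \sum_(p <- s) p.2) /\
  (blockModule actW rel ->
     (forall m, cfs m -> forall v, Vblk actV (cls rel m) v ->
        Vblk actW (cls rel m) (f v)) /\
     (forall v : V, exists ms : seq (G -> Prop),
        (forall m, List.In m ms -> cfs m) /\
        (forall i j, (i < j < size ms)%N ->
           ~ rel (nth (fun _ => False) ms i) (nth (fun _ => False) ms j)) /\
        v = \sum_(m <- ms) proj actV rel m v /\
        f v = \sum_(m <- ms) proj actW rel m (f (proj actV rel m v)))).
Proof.
move=> hbV; split.
  move=> v; have [s [hs ->]] := hbV v.
  exists [seq (p.1, f p.2) | p <- s & p.2 != 0]; split.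
    move=> q hq; have [p [hp ->]] := In_map hq.
    have [hp' hnz] := In_filter hp.
    have [hc hb] := hs p hp'.
    split => //=; last exact: Vblk_f hf hb.
    by exists p.2; split => //; apply/eqP.
  rewrite big_map big_filter (f_sum s (fun p => p.2) hf) [RHS]big_mkcond /=.
  apply: eq_bigr => p _; case: (eqVneq p.2 0) => [->|] //=.
  by rewrite (f0 hf).
move=> hbW; split.
  by move=> m _ v hv; apply: Vblk_f hf hv.
move=> v; have [s [hs ev]] := hbV v.
have hc : forall p, List.In p s -> cfs p.1 by move=> p hp; case: (hs p hp).
have hcm := reps_cfs (rel := rel) hc.
have hsum : v = \sum_(m <- reps rel s) proj actV rel m v.
  rewrite (big_In_eq (H := fun m => \sum_(p <- s | relb rel m p.1) p.2)); last first.
    move=> m hm; rewrite {1}ev; apply: proj_sum => //; first [exact: (hcm m hm) | exact: hs].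
  rewrite (eq_bigr (fun m => \sum_(p <- s) (if relb rel m p.1 then p.2 else 0))); last first.
    by move=> m _; rewrite big_mkcond.
  rewrite exchange_big /=.
  rewrite {1}ev; apply: big_In_eq => p hp.
  rewrite -(big_mkcond (fun m => relb rel m p.1)).
  rewrite big_const_seq (count1 hrel (reps_nr hrel hc) hcm (hc p hp) (reps_cover hrel hc hp)).
  by rewrite /= addr0.
exists (reps rel s); split => //; split; first by apply: nr_nth; exact: reps_nr.
split => //.
rewrite {1}hsum (f_sum _ _ hf); apply: big_In_eq => m hm.
have [u hu] : exists u, isProj actV rel m v u.
  by rewrite {1}ev; eexists; apply: isProj_sum => //; first [exact: (hcm m hm) | exact: hs].
symmetry; apply: (proj_id hrel hW (hcm m hm)); apply: Vblk_f hf _.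
exact: (proj_spec (ex_intro _ u hu)).1.
Qed.
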